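(* Let $G$ be a road network with $n$ nodes and maximum degree $\Delta$, with random edge nuances as in the context. Let $i\in[0,h]$, let $B$ be a $4\times4$-cell region of $R_i$, and let $s$ be a node in $B$. Let $\zeta$ (resp. $\zeta'$) be the event that there exists another node $v$ such that the local shortest path from $s$ to $v$ (resp. from $v$ to $s$) in $B$ is not unique. Then $\Pr\{\zeta\vee\zeta'\}\le \binom{\Delta}{2}\cdot 2n/\tau$.
   Context: A road network $G$ is a directed, connected graph of bounded degree with $n$ nodes, each located at a point of the plane, each edge $e$ having positive length $l(e)$; $l(P)$ is the sum of edge lengths along a path. Grids: $R_h$ is a $4\times4$-cell grid tightly covering all nodes; each cell is recursively split into $2\times2$ cells until each cell contains at most one node, giving $h$ grids; for $i\in[0,h]$, $R_i$ denotes the square grid over the same square with $2^{h+2-i}\times2^{h+2-i}$ cells. A $4\times4$-cell region is a block of $4\times4$ consecutive cells. A path is a local path in $B$ if at most one of its edges (as a straight segment) intersects the boundary of $B$. Each edge $e$ receives an independent uniformly random integer nuance $\rho(e)\in\{0,\dots,\tau-1\}$, and $\rho(P)=\sum_{e\in P}\rho(e)$. Path $P_1$ is shorter than $P_2$ if $l(P_1)<l(P_2)$, or $l(P_1)=l(P_2)$ and $\rho(P_1)<\rho(P_2)$. A local shortest path from $s$ to $v$ in $B$ is a local path in $B$ from $s$ to $v$ not beaten in this order by any other such local path; it is not unique if two distinct such paths have equal length and equal nuance. *)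

(* Defs.v *)
(* R is an abstract real field; probability is the uniform
   (counting) measure on the finite set of nuance assignments. *)
From HB Require Import structures.
From mathcomp Require Import all_boot all_order all_algebra.
From mathcomp Require Import boolp.

Set Implicit Arguments.
Unset Strict Implicit.
Unset Printing Implicit Defensive.

Import Order.TTheory GRing.Theory Num.Theory.
Local Open Scope ring_scope.

Section RoadNetwork.
Variable R : realFieldType.
Variable V : finType.
Variable adj : rel V.

Definition edge_t := {e : V * V | adj e.1 e.2}.

Definition deg (v : V) : nat := (#|[set w | adj v w]| + #|[set w | adj w v]|)%N.
Definition max_deg : nat := (\max_(v : V) deg v)%N.

Definition connected_graph : Prop :=
  forall u w : V, connect (fun x y => adj x y || adj y x) u w.

(* A path starting at u is u :: p with path adj u p; its edge list: *)
Definition pedges (u : V) (p : seq V) : seq (V * V) := zip (u :: p) p.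

Variable l : V -> V -> R.
Definition plen (u : V) (p : seq V) : R := \sum_(e <- pedges u p) l e.1 e.2.

Variable tau : nat.
(* nuance of an edge (u,w) under an assignment rho (0 if not an edge) *)
Definition enuance (rho : {ffun edge_t -> 'I_tau}) (u w : V) : nat :=
  match @insub _ (fun e : V * V => adj e.1 e.2) edge_t (u, w) with
  | Some e => nat_of_ord (rho e)
  | None => 0%N
  end.
Definition pnuance (rho : {ffun edge_t -> 'I_tau}) (u : V) (p : seq V) : nat :=
  (\sum_(e <- pedges u p) enuance rho e.1 e.2)%N.

Definition shorter rho (u : V) (q p : seq V) : Prop :=
  plen u q < plen u p \/ (plen u q = plen u p /\ (pnuance rho u q < pnuance rho u p)%N).

Variable pos : V -> R * R.

Definition in_box (xl yl c : R) (z : R * R) : bool :=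
  (xl <= z.1 <= xl + c) && (yl <= z.2 <= yl + c).
Definition on_boundary (xl yl c : R) (z : R * R) : bool :=
  in_box xl yl c z &&
  [|| z.1 == xl, z.1 == xl + c, z.2 == yl | z.2 == yl + c].
Definition seg_meets_boundary (xl yl c : R) (a b : R * R) : Prop :=
  exists t : R, 0 <= t <= 1 /\
    on_boundary xl yl c ((1 - t) * a.1 + t * b.1, (1 - t) * a.2 + t * b.2).

Definition edge_meets (xl yl c : R) (e : V * V) : Prop :=
  seg_meets_boundary xl yl c (pos e.1) (pos e.2).

(* u::p is a local path from u to w in the square B = (xl,yl,c):
   a path of G from u to w at most one of whose edges intersects the
   boundary of B (edges are counted by position along the path) *)
Definition local_path (xl yl c : R) (u : V) (p : seq V) (w : V) : Prop :=
  [/\ path adj u p, last u p = w &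
      forall j k : nat, (j < k < size (pedges u p))%N ->
        ~ (edge_meets xl yl c (nth (u, u) (pedges u p) j) /\
           edge_meets xl yl c (nth (u, u) (pedges u p) k))].

Definition local_shortest (rho : {ffun edge_t -> 'I_tau}) (xl yl c : R)
    (u : V) (p : seq V) (w : V) : Prop :=
  local_path xl yl c u p w /\
  forall q, local_path xl yl c u q w -> ~ shorter rho u q p.

Definition lsp_not_unique rho (xl yl c : R) (u w : V) : Prop :=
  exists p q : seq V, p <> q /\
    local_shortest rho xl yl c u p w /\ local_shortest rho xl yl c u q w.

(* 1-D: coordinate z lies in the a-th of m cells of side c starting at x0
   (cells half-open [.,.), the last one closed) *)
Definition in_slab (x0 c : R) (m a : nat) (z : R) : bool :=
  (x0 + a%:R * c <= z) &&
  ((z < x0 + a.+1%:R * c) || ((a.+1 == m) && (z <= x0 + a.+1%:R * c))).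
Definition node_in_cell (x0 y0 c : R) (m a b : nat) (v : V) : bool :=
  in_slab x0 c m a (pos v).1 && in_slab y0 c m b (pos v).2.

(* the square (x0,y0,L) tightly covers all nodes: it contains all nodes and
   its side equals the larger of the x- and y-extents of the nodes *)
Definition tight_square (x0 y0 L : R) : Prop :=
  0 < L /\ (forall v, in_box x0 y0 L (pos v)) /\
  exists u w, (pos w).1 - (pos u).1 = L \/ (pos w).2 - (pos u).2 = L.

Definition ncells (h i : nat) : nat := (2 ^ (h + 2 - i))%N.
Definition cside (L : R) (h i : nat) : R := L / (ncells h i)%:R.

Definition fine_enough (x0 y0 L : R) (k : nat) : Prop :=
  forall a b : nat, (a < 2 ^ (k + 2))%N -> (b < 2 ^ (k + 2))%N ->
  forall u w, node_in_cell x0 y0 (L / (2 ^ (k + 2))%:R) (2 ^ (k + 2)) a b u ->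
              node_in_cell x0 y0 (L / (2 ^ (k + 2))%:R) (2 ^ (k + 2)) a b w ->
              u = w.
(* h = number of recursive 2x2 splittings of the initial 4x4 grid needed
   until every cell contains at most one node *)
Definition grid_height (x0 y0 L : R) (h : nat) : Prop :=
  fine_enough x0 y0 L h /\ forall k, fine_enough x0 y0 L k -> (h <= k)%N.

(* (a,b) is the lower-left cell of a 4x4-cell region of R_i *)
Definition region (h i a b : nat) : Prop :=
  (a + 4 <= ncells h i)%N /\ (b + 4 <= ncells h i)%N.
Definition node_in_region (x0 y0 L : R) (h i a b : nat) (s : V) : Prop :=
  exists a' b', [/\ (a <= a' < a + 4)%N, (b <= b' < b + 4)%N &
    node_in_cell x0 y0 (cside L h i) (ncells h i) a' b' s].
Definition region_xl (x0 L : R) (h i a : nat) : R := x0 + a%:R * cside L h i.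
Definition region_side (L : R) (h i : nat) : R := 4%:R * cside L h i.

Definition zeta rho (xl yl c : R) (s : V) : Prop :=
  exists v, v <> s /\ lsp_not_unique rho xl yl c s v.
Definition zeta' rho (xl yl c : R) (s : V) : Prop :=
  exists v, v <> s /\ lsp_not_unique rho xl yl c v s.

Definition Pr (E : {ffun edge_t -> 'I_tau} -> Prop) : R :=
  #|[set rho : {ffun edge_t -> 'I_tau} | `[< E rho >] ]|%:R /
  (tau ^ #|{: edge_t}|)%N%:R.
End RoadNetwork.

(* Main.v *)
Require Import Defs.
From HB Require Import structures.
From mathcomp Require Import all_boot all_order all_algebra.
From mathcomp Require Import boolp.
From mathcomp Require Import zify.
Import Order.TTheory GRing.Theory Num.Theory.
Local Open Scope ring_scope.
Set Implicit Arguments.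
Unset Strict Implicit.
Unset Printing Implicit Defensive.

Lemma count_le1 (T : Type) (a : pred T) (d : T) (s : seq T) :
  (count a s <= 1)%N <->
  (forall j k : nat, (j < k < size s)%N -> ~ (a (nth d s j) /\ a (nth d s k))).
Proof.
split.
- elim: s => [|x s IH] /= H j k; first by rewrite ltn0 andbF.
  case: j k => [|j] [|k] //= jks.
  + move=> [ax ak]. move: H; rewrite ax add1n ltnS leqn0 -[_ == 0%N]negbK -lt0n -has_count.
    by case/negP; apply/(has_nthP d); exists k.
  + case/andP: jks => jk ks.
    apply: IH; last by rewrite ltnS in jk ks; rewrite jk.
    by apply: leq_trans H; apply: leq_addl.
- elim: s => [|x s IH] //= H.
  case ax: (a x) => /=.
  + rewrite add1n ltnS leqn0 -[_ == 0%N]negbK -lt0n -has_count.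
    apply/negP => hs.
    apply: (H 0%N (find a s).+1); first by rewrite /= ltnS -has_find hs.
    by split=> //=; apply: nth_find.
  + apply: IH => j k /andP[jk ks].
    by apply: (H j.+1 k.+1); rewrite /= ltnS jk.
Qed.

Lemma diverge (T : eqType) (c : T) (a b : seq T) :
  uniq (c :: a) -> uniq (c :: b) -> last c a = last c b -> a <> b ->
  exists r y1 y2 a' b', [/\ a = r ++ y1 :: a', b = r ++ y2 :: b' & y1 <> y2].
Proof.
elim: a c b => [|x a IH] c [|y b] //=.
- move=> _ /andP[cn _] e _; case/negP: cn; rewrite e; exact: mem_last.
- move=> /andP[cn _] _ e _; case/negP: cn; rewrite -e; exact: mem_last.
- move=> /andP[_ ua] /andP[_ ub] e ne.
  case: (eqVneq x y) => [exy|nxy]; last first.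
    by exists [::], x, y, a, b; split=> //; apply/eqP.
  subst y.
  have [|r [y1 [y2 [a' [b' [h1 h2 h3]]]]]] := IH x b ua ub e; first by move=> h; apply: ne; rewrite h.
  by exists (x :: r), y1, y2, a', b'; rewrite h1 h2.
Qed.

Lemma converge (T : eqType) (s : T) (p q : seq T) :
  uniq (s :: p) -> uniq (s :: q) -> last s p = last s q -> p <> q ->
  exists Q1 Q2 w S, [/\ p = Q1 ++ w :: S, q = Q2 ++ w :: S & last s Q1 <> last s Q2].
Proof.
move=> up uq e ne.
set v := last s p.
have hp : rev (s :: p) = v :: rev (belast s p) by rewrite lastI rev_rcons.
have hq : rev (s :: q) = v :: rev (belast s q) by rewrite lastI rev_rcons /v e.
have lp : forall t, last s t = v -> last v (rev (belast s t)) = s.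
  move=> t; case: t => [|x t] /= h; first by rewrite h.
  by rewrite rev_cons last_rcons.
have [r [y1 [y2 [a' [b' [h1 h2 h3]]]]]] :
    exists r y1 y2 a' b', [/\ rev (belast s p) = r ++ y1 :: a',
        rev (belast s q) = r ++ y2 :: b' & y1 <> y2].
  apply: (@diverge _ v).
  - by rewrite -hp rev_uniq.
  - by rewrite -hq rev_uniq.
  - by rewrite !lp // -e.
  - move=> h; apply: ne; have := congr1 rev h; rewrite !revK => h'.
    suff : s :: p = s :: q by case.
    by rewrite (lastI s p) (lastI s q) h' e.
have Hp : s :: p = rcons (rev a') y1 ++ rcons (rev r) v.
  by rewrite -[s :: p]revK hp h1 rev_cons rev_cat rev_cons rcons_cat.
have Hq : s :: q = rcons (rev b') y2 ++ rcons (rev r) v.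
  by rewrite -[s :: q]revK hq h2 rev_cons rev_cat rev_cons rcons_cat.
have [w [S eS]] : exists w S, rcons (rev r) v = w :: S.
  by case: (rev r) => [|z t] /=; [exists v, [::] | exists z, (rcons t v)].
have gen : forall t K y, s :: t = rcons K y ++ w :: S ->
    exists Q, t = Q ++ w :: S /\ last s Q = y.
  move=> t K y; case: K => [|k K] /=; case=> -> ->; first by exists [::].
  by exists (rcons K y); rewrite cat_rcons last_rcons.
rewrite eS in Hp Hq.
have [Q1 [-> l1]] := gen _ _ _ Hp.
have [Q2 [-> l2]] := gen _ _ _ Hq.
by exists Q1, Q2, w, S; rewrite l1 l2.
Qed.

Definition ltw (R : realFieldType) (L1 : R) (n1 : nat) (L2 : R) (n2 : nat) : Prop :=
  L1 < L2 \/ (L1 = L2 /\ (n1 < n2)%N).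

Lemma nltw (R : realFieldType) (L1 : R) n1 L2 n2 :
  ~ ltw L1 n1 L2 n2 -> L2 <= L1 /\ (L1 = L2 -> (n2 <= n1)%N).
Proof.
move=> h; split.
  by rewrite leNgt; apply/negP => h'; apply: h; left.
by move=> e; rewrite leqNgt; apply/negP => h'; apply: h; right.
Qed.

Lemma core (R : realFieldType) (LA LB LA' LB' : R) (qA qA' a b nB nB' : nat) :
 ~ ltw LA' (qA' + a) LA (qA + a) -> ~ ltw LB nB LA (qA + a) ->
 ~ ltw LA (qA + a) LB nB -> ~ ltw LB' nB' LB nB ->
 ~ ltw LA (qA + b) LA' (qA' + b) -> ~ ltw LB' nB' LA' (qA' + b) ->
 ~ ltw LA' (qA' + b) LB' nB' -> ~ ltw LB nB LB' nB' -> a = b.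
Proof.
move=> /nltw [l1 n1] /nltw [l2 n2] /nltw [l3 n3] /nltw [l4 n4]
       /nltw [l5 n5] /nltw [l6 n6] /nltw [l7 n7] /nltw [l8 n8].
have eAB : LA = LB by apply/eqP; rewrite eq_le l2 l3.
have eBB : LB = LB' by apply/eqP; rewrite eq_le l4 l8.
have eAB' : LA' = LB' by apply/eqP; rewrite eq_le l6 l7.
have eAA : LA = LA' by rewrite eAB eBB eAB'.
have := n1 (esym eAA); have := n2 (esym eAB); have := n3 eAB; have := n4 (esym eBB).
have := n5 eAA; have := n6 (esym eAB'); have := n7 eAB'; have := n8 eBB.
move=> *; lia.
Qed.

Lemma card_perturb (E0 : finType) (tau : nat) (E : {set {ffun E0 -> 'I_tau}}) (e0 : E0) :
  (forall r1 r2, r1 \in E -> r2 \in E -> (forall f, f != e0 -> r1 f = r2 f) -> r1 e0 = r2 e0) ->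
  (#|E| * tau <= tau ^ #|E0|)%N.
Proof.
move=> H.
pose g (x : {ffun E0 -> 'I_tau} * 'I_tau) : {ffun E0 -> 'I_tau} :=
  [ffun f => if f == e0 then x.2 else x.1 f].
have inj : {in setX E [set: 'I_tau] &, injective g}.
  move=> [r1 k1] [r2 k2]; rewrite !inE /= !andbT => h1 h2 e.
  have hk : k1 = k2 by have := congr1 (fun F : {ffun E0 -> 'I_tau} => F e0) e; rewrite /g !ffunE eqxx.
  have hf : forall f, f != e0 -> r1 f = r2 f.
    move=> f nf; have := congr1 (fun F : {ffun E0 -> 'I_tau} => F f) e; by rewrite /g !ffunE (negbTE nf).
  have h0 := H _ _ h1 h2 hf.
  by congr (_, _) => //; apply/ffunP => f; case: (eqVneq f e0) => [->|/hf].
have := card_in_imset inj; rewrite cardsX cardsT card_ord => <-.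
by rewrite -[X in (_ <= X ^ _)%N]card_ord -card_ffun max_card.
Qed.
Section Paths.
Variables (R : realFieldType) (V : finType) (adj : rel V) (l : V -> V -> R)
  (pos : V -> R * R) (tau : nat) (xl yl cc : R).
Hypothesis lpos : forall u w, adj u w -> 0 < l u w.
Implicit Types (u x w : V) (p q r : seq V).

Definition bnd (e : V * V) : bool := `[< edge_meets pos xl yl cc e >].
Definition nb (u : V) (p : seq V) : nat := count bnd (pedges u p).

Lemma pedges_cons u x p : pedges u (x :: p) = (u, x) :: pedges x p.
Proof. by []. Qed.

Lemma pedges_cat u (p1 p2 : seq V) :
  pedges u (p1 ++ p2) = pedges u p1 ++ pedges (last u p1) p2.
Proof.
elim: p1 u => [|x p1 IH] u /=; first by case: p2.
by rewrite !pedges_cons IH.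
Qed.

Lemma pedges_rcons u p x : pedges u (rcons p x) = rcons (pedges u p) (last u p, x).
Proof. by rewrite -cats1 pedges_cat -cats1. Qed.

Lemma mem_pedges u p (e : V * V) : e \in pedges u p -> (e.1 \in u :: p) /\ (e.2 \in p).
Proof.
elim: p u => [|x p IH] u //=.
rewrite pedges_cons in_cons => /orP[/eqP -> /=|/IH [h1 h2]].
  by rewrite !in_cons !eqxx /= ?orbT.
by move: h1; rewrite !in_cons h2 => ->; rewrite !orbT.
Qed.

Lemma plen_cat u (p1 p2 : seq V) : plen l u (p1 ++ p2) = plen l u p1 + plen l (last u p1) p2.
Proof. by rewrite /plen pedges_cat big_cat. Qed.

Lemma pnuance_cat (rho : {ffun edge_t adj -> 'I_tau}) u (p1 p2 : seq V) :
  pnuance rho u (p1 ++ p2) = (pnuance rho u p1 + pnuance rho (last u p1) p2)%N.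
Proof. by rewrite /pnuance pedges_cat big_cat. Qed.

Lemma nb_cat u (p1 p2 : seq V) : nb u (p1 ++ p2) = (nb u p1 + nb (last u p1) p2)%N.
Proof. by rewrite /nb pedges_cat count_cat. Qed.

Lemma plen_cons u x p : plen l u (x :: p) = l u x + plen l x p.
Proof. by rewrite /plen pedges_cons big_cons. Qed.

Lemma pnuance_cons (rho : {ffun edge_t adj -> 'I_tau}) u x p :
  pnuance rho u (x :: p) = (enuance rho u x + pnuance rho x p)%N.
Proof. by rewrite /pnuance pedges_cons big_cons. Qed.

Lemma nb_cons u x p : nb u (x :: p) = (bnd (u, x) + nb x p)%N.
Proof. by rewrite /nb pedges_cons. Qed.

Lemma plen_ge0 u p : path adj u p -> 0 <= plen l u p.
Proof.
elim: p u => [|x p IH] u /=; first by rewrite /plen big_nil.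
case/andP=> a pa; rewrite plen_cons addr_ge0 ?IH //.
exact: ltW (lpos a).
Qed.

Lemma local_pathE u p w :
  local_path adj pos xl yl cc u p w <-> [/\ path adj u p, last u p = w & (nb u p <= 1)%N].
Proof.
split.
- case=> h1 h2 h3; split=> //; apply/(count_le1 _ (u, u)) => j k jk [a b].
  by apply: (h3 j k jk); split; apply/asboolP.
- case=> h1 h2 /(count_le1 _ (u, u)) h3; split=> // j k jk [a b].
  by apply: (h3 j k jk); split; apply/asboolP.
Qed.

Lemma suffix_facts x r r1 r2 u : x :: r = r1 ++ u :: r2 -> path adj x r ->
  [/\ path adj u r2, last u r2 = last x r, (nb u r2 <= nb x r)%N
     & plen l u r2 <= plen l x r].
Proof.
case: r1 => [|y r1] /=.
  by case=> -> ->; split; rewrite ?leqnn ?lexx.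
case=> -> -> ; rewrite cat_path /= => /and3P[p1 a p2].
split=> //; first by rewrite last_cat.
  by rewrite nb_cat nb_cons addnA leq_addl.
rewrite plen_cat plen_cons addrA lerDr addr_ge0 ?plen_ge0 //.
exact: ltW (lpos a).
Qed.

Lemma suffix_uniq x r r1 r2 u : x :: r = r1 ++ u :: r2 -> uniq (x :: r) -> uniq (u :: r2).
Proof. by move=> ->; rewrite cat_uniq => /and3P[]. Qed.

Lemma shortcut u p : path adj u p ->
  exists p', [/\ uniq (u :: p'), path adj u p', last u p' = last u p,
     (nb u p' <= nb u p)%N & (p' = p \/ plen l u p' < plen l u p)].
Proof.
elim: p u => [|x p IH] u /=.
  by move=> _; exists [::]; split; rewrite // ?leqnn; left.
case/andP=> a pa; have [r [ur pr lr nr hr]] := IH x pa.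
have plenr : plen l x r <= plen l x p.
  by case: hr => [->|/ltW] //.
case: (boolP (u \in x :: r)) => [ui|un].
- have [r1 [r2 e]] : exists r1 r2, x :: r = r1 ++ u :: r2.
    by case/splitPr: ui => r1 r2; exists r1, r2.
  have [f1 f2 f3 f4] := suffix_facts e pr.
  exists r2; split => //.
  + exact: suffix_uniq e ur.
  + by rewrite f2.
  + by rewrite nb_cons (leq_trans f3) // (leq_trans nr) // leq_addl.
  + right; rewrite plen_cons (le_lt_trans f4) // (le_lt_trans plenr) //.
    by rewrite ltrDr lpos.
- exists (x :: r); split => //=.
  + by rewrite un.
  + by rewrite a.
  + by rewrite !nb_cons leq_add2l.
  + case: hr => [->|h]; [by left | right].
    by rewrite !plen_cons ltrD2l.
Qed.

Local Notation RT := {ffun edge_t adj -> 'I_tau}.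

Lemma enuance_edge (rho : RT) x w (a : adj x w) :
  enuance rho x w = rho (Sub (x, w) a : edge_t adj).
Proof. by rewrite /enuance insubT. Qed.

Lemma enuance_agree (r1 r2 : RT) (e : V * V) x y :
  (forall f : edge_t adj, val f != e -> r1 f = r2 f) -> (x, y) != e ->
  enuance r1 x y = enuance r2 x y.
Proof.
move=> H ne; rewrite /enuance; case: insubP => [f _ hv|] //.
by rewrite H // hv.
Qed.

Lemma pnuance_agree (r1 r2 : RT) (e : V * V) u p :
  (forall f : edge_t adj, val f != e -> r1 f = r2 f) -> e \notin pedges u p ->
  pnuance r1 u p = pnuance r2 u p.
Proof.
move=> H ne; rewrite /pnuance; apply: eq_big_seq => f hf.
apply: (enuance_agree H).
by rewrite -surjective_pairing; apply: contraNneq ne => <-.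
Qed.

Lemma ltw_addr (a b x : R) (n m k : nat) :
  ltw (a + x) (n + k) (b + x) (m + k) -> ltw a n b m.
Proof.
rewrite /ltw ltrD2r ltn_add2r; case=> [h|[h1 h2]]; [by left | right].
by split=> //; apply: (addIr x).
Qed.

Lemma ltw_add (a b x : R) (n m k : nat) :
  ltw a n b m -> ltw (a + x) (n + k) (b + x) (m + k).
Proof.
rewrite /ltw ltrD2r ltn_add2r; case=> [h|[h1 h2]]; [by left | right].
by rewrite h1.
Qed.

Lemma ls_uniq (rho : RT) u p w :
  local_shortest l pos rho xl yl cc u p w -> uniq (u :: p).
Proof.
case=> /local_pathE [pa lp np] opt.
have [p' [u' pa' lp' np' h]] := shortcut pa.
case: h => [<- //|lt]; exfalso.
apply: (opt p'); last by left.
by apply/local_pathE; split => //; [rewrite lp' | apply: leq_trans np].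
Qed.

Variable s : V.

Definition Cl (w : V) (c : bool) (r : seq V) : bool :=
  [&& path adj s r, last s r == w & (nb s r <= c)%N].
Definition opt (rho : RT) w c p := forall r, Cl w c r -> ~ shorter l rho s r p.

Lemma half_in (rho : RT) v p Q w S :
  local_shortest l pos rho xl yl cc s p v -> p = Q ++ w :: S ->
  [/\ Cl w (nb w S == 0%N) (rcons Q w), w \notin s :: Q,
      opt rho w (nb w S == 0%N) (rcons Q w) & adj (last s Q) w].
Proof.
move=> ls ep; have up := ls_uniq ls.
case: ls => /local_pathE [pa lp np] op.
have ep' : p = rcons Q w ++ S by rewrite cat_rcons.
move: pa lp np; rewrite ep' cat_path nb_cat last_cat last_rcons => /andP[pQ pS] lp np.
have hc : forall k, ((k + nb w S <= 1)%N) = (k <= (nb w S == 0%N))%N.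
  have : (nb w S <= 1)%N by apply: leq_trans np; apply: leq_addl.
  by move=> + k; case: (nb w S) => [|[|n]] //= _; rewrite ?addn0 ?addn1.
split.
- by rewrite /Cl pQ last_rcons eqxx -hc.
- by move: up; rewrite ep -cat_cons cat_uniq => /and3P[_ /hasPn h _]; apply: h; rewrite mem_head.
- move=> r /and3P[pr /eqP lr nr] sh.
  apply: (op (r ++ S)).
    apply/local_pathE; split.
    + by rewrite cat_path pr lr.
    + by rewrite last_cat lr.
    + by rewrite nb_cat lr hc.
  move: sh; rewrite /shorter ep' !plen_cat !pnuance_cat lr ?last_rcons.
  exact: ltw_add.
- by move: pQ; rewrite rcons_path => /andP[].
Qed.

Lemma pnuance_rcons (rho : RT) u p x :
  pnuance rho u (rcons p x) = (pnuance rho u p + enuance rho (last u p) x)%N.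
Proof. by rewrite /pnuance pedges_rcons -cats1 big_cat big_seq1. Qed.

Lemma avoid_in Q w (x : V) : w \notin s :: Q -> (x, w) \notin pedges s Q.
Proof.
move=> nw; apply/negP => /mem_pedges [_ /= h]; case/negP: nw.
by rewrite in_cons h orbT.
Qed.

Lemma avoid_in2 Q w x0 : w \notin s :: Q -> last s Q != x0 -> (x0, w) \notin pedges s (rcons Q w).
Proof.
move=> nw nx; rewrite pedges_rcons mem_rcons in_cons negb_or (avoid_in _ nw) andbT.
by apply: contra nx => /eqP [->].
Qed.

Definition PPin (rho : RT) w x1 x2 c : Prop := exists Q1 Q2,
 [/\ Cl w c (rcons Q1 w) /\ Cl w c (rcons Q2 w),
     last s Q1 = x1 /\ last s Q2 = x2,
     w \notin s :: Q1 /\ w \notin s :: Q2 &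
     opt rho w c (rcons Q1 w) /\ opt rho w c (rcons Q2 w)].

Lemma PPin_sym rho w x1 x2 c : PPin rho w x1 x2 c -> PPin rho w x2 x1 c.
Proof.
by case=> Q1 [Q2 [[a b] [d e] [f g] [h i]]]; exists Q2, Q1.
Qed.

Lemma zeta_cover (rho : RT) v : lsp_not_unique l pos rho xl yl cc s v ->
  exists w x0 y c, [/\ (enum_rank x0 < enum_rank y)%N, adj x0 w, adj y w & PPin rho w x0 y c].
Proof.
case=> p [q [ne [lp lq]]].
have up := ls_uniq lp; have uq := ls_uniq lq.
have e : last s p = last s q.
  by case: lp => /local_pathE [_ -> _] _; case: lq => /local_pathE [_ -> _] _.
have [Q1 [Q2 [w [S [ep eq nl]]]]] := converge up uq e ne.
have [c1 n1 o1 a1] := half_in lp ep.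
have [c2 n2 o2 a2] := half_in lq eq.
have pp : PPin rho w (last s Q1) (last s Q2) (nb w S == 0%N) by exists Q1, Q2.
case: (ltngtP (enum_rank (last s Q1)) (enum_rank (last s Q2))) => h.
- by exists w, (last s Q1), (last s Q2), (nb w S == 0%N); split.
- by exists w, (last s Q2), (last s Q1), (nb w S == 0%N); split => //; apply: PPin_sym.
- by exfalso; apply: nl; apply/enum_rank_inj/val_inj.
Qed.

Definition Ein w x0 c : {set RT} :=
  [set rho | `[< exists y, (enum_rank x0 < enum_rank y)%N /\ PPin rho w x0 y c >]].

Lemma Ein_perturb w x0 c (a : adj x0 w) :
  (#|Ein w x0 c| * tau <= tau ^ #|{: edge_t adj}|)%N.
Proof.
apply: (@card_perturb _ _ _ (Sub (x0, w) a)) => r1 r2.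
rewrite !inE => /asboolP [y [hy [Q1 [Q2 [[C1 C2] [L1 L2] [N1 N2] [O1 O2]]]]]].
move=> /asboolP [y' [hy' [Q1' [Q2' [[C1' C2'] [L1' L2'] [N1' N2'] [O1' O2']]]]]] ag.
have ag' : forall f : edge_t adj, val f != (x0, w) -> r1 f = r2 f.
  by move=> f nf; apply: ag; apply: contra nf => /eqP ->.
apply: val_inj; rewrite /= -!enuance_edge.
have ny : last s Q2 != x0 by rewrite L2; apply: contraTneq hy => ->; rewrite ltnn.
have ny' : last s Q2' != x0 by rewrite L2'; apply: contraTneq hy' => ->; rewrite ltnn.
have eA1 := pnuance_rcons r1 s Q1 w; rewrite L1 in eA1.
have eA1' := pnuance_rcons r1 s Q1' w; rewrite L1' in eA1'.
have eA2 := pnuance_rcons r2 s Q1 w; rewrite L1 -(pnuance_agree ag' (avoid_in _ N1)) in eA2.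
have eA2' := pnuance_rcons r2 s Q1' w; rewrite L1' -(pnuance_agree ag' (avoid_in _ N1')) in eA2'.
have eB := pnuance_agree ag' (avoid_in2 N2 ny).
have eB' := pnuance_agree ag' (avoid_in2 N2' ny').
apply: (@core _ (plen l s (rcons Q1 w)) (plen l s (rcons Q2 w))
     (plen l s (rcons Q1' w)) (plen l s (rcons Q2' w))
     (pnuance r1 s Q1) (pnuance r1 s Q1') _ _
     (pnuance r1 s (rcons Q2 w)) (pnuance r2 s (rcons Q2' w))).
- by rewrite -eA1 -eA1'; exact: O1 _ C1'.
- by rewrite -eA1; exact: O1 _ C2.
- by rewrite -eA1; exact: O2 _ C1.
- by rewrite -eB'; exact: O2 _ C2'.
- by rewrite -eA2 -eA2'; exact: O1' _ C1.
- by rewrite -eA2'; exact: O1' _ C2'.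
- by rewrite -eA2'; exact: O2' _ C1'.
- by rewrite eB; exact: O2' _ C2.
Qed.

Lemma ltw_addl (a b x : R) (n m k : nat) :
  ltw a n b m -> ltw (x + a) (k + n) (x + b) (k + m).
Proof. by rewrite ![(x + _)]addrC ![(k + _)%N]addnC; apply: ltw_add. Qed.

Definition Cl' (w : V) (c : bool) (r : seq V) : bool :=
  [&& path adj w r, last w r == s & (nb w r <= c)%N].
Definition opt' (rho : RT) w c p := forall r, Cl' w c r -> ~ shorter l rho w r p.

Lemma half_out (rho : RT) v p r y T :
  local_shortest l pos rho xl yl cc v p s -> p = r ++ y :: T ->
  [/\ Cl' (last v r) (nb v r == 0%N) (y :: T), last v r \notin y :: T,
      opt' rho (last v r) (nb v r == 0%N) (y :: T) & adj (last v r) y].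
Proof.
move=> ls ep; have up := ls_uniq ls.
case: ls => /local_pathE [pa lp np] op.
move: pa lp np; rewrite ep cat_path nb_cat last_cat => /andP[pr pT] lp np.
have hc : forall k, ((nb v r + k <= 1)%N) = (k <= (nb v r == 0%N))%N.
  have : (nb v r <= 1)%N by apply: leq_trans np; apply: leq_addr.
  by move=> + k; case: (nb v r) => [|[|n]] //= _; rewrite ?add0n ?add1n.
split.
- by rewrite /Cl' pT lp eqxx -hc.
- move: up; rewrite ep -cat_cons cat_uniq => /and3P[_ /hasPn h _].
  by apply/negP => /h /=; rewrite mem_last.
- move=> r' /and3P[pr' /eqP lr' nr'] sh.
  apply: (op (r ++ r')).
    apply/local_pathE; split.
    + by rewrite cat_path pr pr'.
    + by rewrite last_cat lr'.
    + by rewrite nb_cat hc.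
  move: sh; rewrite /shorter ep !plen_cat !pnuance_cat.
  exact: ltw_addl.
- by move: pT => /= /andP[].
Qed.

Definition PPout (rho : RT) w y1 y2 c : Prop := exists T1 T2,
 [/\ Cl' w c (y1 :: T1) /\ Cl' w c (y2 :: T2),
     w \notin y1 :: T1 /\ w \notin y2 :: T2 &
     opt' rho w c (y1 :: T1) /\ opt' rho w c (y2 :: T2)].

Lemma zeta'_cover (rho : RT) v : lsp_not_unique l pos rho xl yl cc v s ->
  exists w y0 y c, [/\ (enum_rank y0 < enum_rank y)%N, adj w y0, adj w y & PPout rho w y0 y c].
Proof.
case=> p [q [ne [lp lq]]].
have up := ls_uniq lp; have uq := ls_uniq lq.
have e : last v p = last v q.
  by case: lp => /local_pathE [_ -> _] _; case: lq => /local_pathE [_ -> _] _.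
have [r [y1 [y2 [a' [b' [ep eq nl]]]]]] := diverge up uq e ne.
have [c1 n1 o1 a1] := half_out lp ep.
have [c2 n2 o2 a2] := half_out lq eq.
have pp : PPout rho (last v r) y1 y2 (nb v r == 0%N) by exists a', b'.
have pp' : PPout rho (last v r) y2 y1 (nb v r == 0%N) by exists b', a'.
case: (ltngtP (enum_rank y1) (enum_rank y2)) => h.
- by exists (last v r), y1, y2, (nb v r == 0%N); split.
- by exists (last v r), y2, y1, (nb v r == 0%N); split.
- by exfalso; apply: nl; apply/enum_rank_inj/val_inj.
Qed.

Definition Eout w y0 c : {set RT} :=
  [set rho | `[< exists y, (enum_rank y0 < enum_rank y)%N /\ PPout rho w y0 y c >]].

Lemma avoid_out w y T (x : V) : w \notin y :: T -> (w, x) \notin pedges y T.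
Proof.
move=> nw; apply/negP => /mem_pedges [/= h _]; case/negP: nw; exact: h.
Qed.

Lemma avoid_out2 w y T y0 : w \notin y :: T -> y != y0 -> (w, y0) \notin pedges w (y :: T).
Proof.
move=> nw ny; rewrite pedges_cons in_cons negb_or (avoid_out _ nw) andbT.
by apply: contra ny => /eqP [->].
Qed.

Lemma Eout_perturb w y0 c (a : adj w y0) :
  (#|Eout w y0 c| * tau <= tau ^ #|{: edge_t adj}|)%N.
Proof.
apply: (@card_perturb _ _ _ (Sub (w, y0) a)) => r1 r2.
rewrite !inE => /asboolP [y [hy [T1 [T2 [[C1 C2] [N1 N2] [O1 O2]]]]]].
move=> /asboolP [y' [hy' [T1' [T2' [[C1' C2'] [N1' N2'] [O1' O2']]]]]] ag.
have ag' : forall f : edge_t adj, val f != (w, y0) -> r1 f = r2 f.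
  by move=> f nf; apply: ag; apply: contra nf => /eqP ->.
apply: val_inj; rewrite /= -!enuance_edge.
have ny : y != y0 by apply: contraTneq hy => ->; rewrite ltnn.
have ny' : y' != y0 by apply: contraTneq hy' => ->; rewrite ltnn.
have eA1 := pnuance_cons r1 w y0 T1; rewrite addnC in eA1.
have eA1' := pnuance_cons r1 w y0 T1'; rewrite addnC in eA1'.
have eA2 := pnuance_cons r2 w y0 T1; rewrite addnC -(pnuance_agree ag' (avoid_out _ N1)) in eA2.
have eA2' := pnuance_cons r2 w y0 T1'; rewrite addnC -(pnuance_agree ag' (avoid_out _ N1')) in eA2'.
have eB := pnuance_agree ag' (avoid_out2 N2 ny).
have eB' := pnuance_agree ag' (avoid_out2 N2' ny').
apply: (@core _ (plen l w (y0 :: T1)) (plen l w (y :: T2))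
     (plen l w (y0 :: T1')) (plen l w (y' :: T2'))
     (pnuance r1 y0 T1) (pnuance r1 y0 T1') _ _
     (pnuance r1 w (y :: T2)) (pnuance r2 w (y' :: T2'))).
- by rewrite -eA1 -eA1'; exact: O1 _ C1'.
- by rewrite -eA1; exact: O1 _ C2.
- by rewrite -eA1; exact: O2 _ C1.
- by rewrite -eB'; exact: O2 _ C2'.
- by rewrite -eA2 -eA2'; exact: O1' _ C1.
- by rewrite -eA2'; exact: O1' _ C2'.
- by rewrite -eA2'; exact: O2' _ C1'.
- by rewrite eB; exact: O2' _ C2.
Qed.

Definition Sx (A : {set V}) : {set V} :=
  [set x in A | [exists y, (y \in A) && (enum_rank x < enum_rank y)%N]].

Lemma Sx_sub A : Sx A \subset A.
Proof. by apply/subsetP => x; rewrite inE => /andP[]. Qed.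

Lemma card_Sx A : (#|Sx A| <= #|A|.-1)%N.
Proof.
case: (set_0Vmem A) => [->|[x0 hx0]].
  by have := subset_leq_card (Sx_sub set0); rewrite cards0.
have [m mA mmax] : exists2 m, m \in A & forall i, i \in A -> (enum_rank i <= enum_rank m)%N.
  case: (@arg_maxnP V x0 (mem A) (fun i => nat_of_ord (enum_rank i)) hx0) => m mA H.
  by exists m.
have sub : Sx A \subset A :\ m.
  apply/subsetP => x; rewrite !inE => /andP[xA /existsP [y /andP[yA lt]]].
  rewrite xA andbT; apply: contraTneq lt => ->; rewrite -leqNgt; exact: mmax.
apply: leq_trans (subset_leq_card sub) _.
by rewrite (cardsD1 m A) mA.
Qed.

Definition Sin w := Sx [set x | adj x w].
Definition Sout w := Sx [set y | adj w y].

Lemma cover (rho : RT) :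
  zeta l pos rho xl yl cc s \/ zeta' l pos rho xl yl cc s ->
  exists w c, (exists2 x, x \in Sin w & rho \in Ein w x c) \/
              (exists2 y, y \in Sout w & rho \in Eout w y c).
Proof.
case=> [[v [_ h]]|[v [_ h]]].
- have [w [x0 [y [c [lt a1 a2 pp]]]]] := zeta_cover h.
  exists w, c; left; exists x0.
    by rewrite !inE a1 /=; apply/existsP; exists y; rewrite inE a2.
  by rewrite inE; apply/asboolP; exists y.
- have [w [y0 [y [c [lt a1 a2 pp]]]]] := zeta'_cover h.
  exists w, c; right; exists y0.
    by rewrite !inE a1 /=; apply/existsP; exists y; rewrite inE a2.
  by rewrite inE; apply/asboolP; exists y.
Qed.

Lemma pos_sum (I : finType) (P : pred I) (F : I -> nat) i :
  P i -> (0 < F i)%N -> (0 < \sum_(j | P j) F j)%N.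
Proof. by move=> Pi Fi; rewrite (bigD1 i) //= addn_gt0 Fi. Qed.

Lemma card_sumE (E : {set RT}) : #|E| = (\sum_rho (rho \in E : nat))%N.
Proof. by rewrite -sum1_card big_mkcond; apply: eq_bigr => i _; case: (i \in E). Qed.

Lemma card_U :
  (#|[set rho : RT | `[< zeta l pos rho xl yl cc s \/ zeta' l pos rho xl yl cc s >]]| * tau
   <= \sum_(w : V) (2 * ((#|Sin w| + #|Sout w|) * tau ^ #|{: edge_t adj}|)))%N.
Proof.
set U := [set rho : RT | _].
set T := (tau ^ _)%N.
pose G (rho : RT) := (\sum_(w : V) \sum_(c : bool)
   (\sum_(x in Sin w) (rho \in Ein w x c : nat) + \sum_(y in Sout w) (rho \in Eout w y c : nat)))%N.
have h1 : (#|U| <= \sum_rho G rho)%N.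
  rewrite -sum1_card; apply: leq_trans (_ : \sum_(rho in U) G rho <= _)%N.
    apply: leq_sum => rho; rewrite inE => /asboolP /cover [w [c H]].
    apply: (pos_sum (i := w)) => //; apply: (pos_sum (i := c)) => //.
    rewrite addn_gt0; case: H => [[x xS xE]|[y yS yE]].
      by apply/orP; left; apply: (pos_sum (i := x)) => //; rewrite xE.
    by apply/orP; right; apply: (pos_sum (i := y)) => //; rewrite yE.
  by rewrite [X in (_ <= X)%N](bigID (mem U)) /= leq_addr.
have h2 : (\sum_rho G rho = \sum_(w : V) \sum_(c : bool)
     (\sum_(x in Sin w) #|Ein w x c| + \sum_(y in Sout w) #|Eout w y c|))%N.
  rewrite /G exchange_big; apply: eq_bigr => w _.
  rewrite exchange_big; apply: eq_bigr => c _.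
  rewrite big_split /=; congr (_ + _)%N.
    by rewrite exchange_big; apply: eq_bigr => x _; rewrite card_sumE.
  by rewrite exchange_big; apply: eq_bigr => x _; rewrite card_sumE.
apply: leq_trans (leq_mul h1 (leqnn tau)) _.
rewrite h2 big_distrl /=; apply: leq_sum => w _.
rewrite big_distrl /= big_bool /= mul2n -addnn.
have hc : forall c, ((\sum_(x in Sin w) #|Ein w x c| + \sum_(y in Sout w) #|Eout w y c|) * tau
            <= (#|Sin w| + #|Sout w|) * T)%N.
  move=> c; rewrite mulnDl mulnDl big_distrl big_distrl /=; apply: leq_add.
    rewrite -sum_nat_const; apply: leq_sum => x; rewrite inE => /andP[]; rewrite inE => a _.
    exact: Ein_perturb.
  rewrite -sum_nat_const; apply: leq_sum => x; rewrite inE => /andP[]; rewrite inE => a _.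
  exact: Eout_perturb.
by apply: leq_add; apply: hc.
Qed.
End Paths.

Lemma pred_le_bin2 k : (k.-1 <= 'C(k, 2))%N.
Proof. by case: k => [|k] //; rewrite binS bin1 /= leq_addl. Qed.

Unset Implicit Arguments.
Set Strict Implicit.

Theorem lemma6 (R : realFieldType) (V : finType) (adj : rel V)
    (l : V -> V -> R) (pos : V -> R * R) (tau : nat)
    (x0 y0 L : R) (h i a b : nat) (s : V) :
  connected_graph adj ->
  (forall u w, adj u w -> 0 < l u w) ->
  (0 < tau)%N ->
  tight_square pos x0 y0 L ->
  grid_height pos x0 y0 L h ->
  (i <= h)%N ->
  region h i a b ->
  node_in_region pos x0 y0 L h i a b s ->
  let xl := region_xl x0 L h i a in
  let yl := region_xl y0 L h i b in
  let c := region_side L h i in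
  Pr R (adj:=adj) (tau:=tau) (fun rho => zeta l pos rho xl yl c s \/ zeta' l pos rho xl yl c s)
  <= 'C(max_deg adj, 2)%:R * (2 * #|V|)%N%:R / tau%:R.
Proof.
move=> _ lpos tau0 _ _ _ _ _.
cbv zeta; rewrite /Pr; cbv beta.
have H := card_U pos tau (region_xl x0 L h i a) (region_xl y0 L h i b) (region_side L h i) lpos s.
set U := #|_| in H *.
set T := (tau ^ _)%N in H *.
have T0 : (0 < T)%N by rewrite expn_gt0 tau0.
have HN : (U * tau <= 'C(max_deg adj, 2) * (2 * #|V|) * T)%N.
  apply: leq_trans H _.
  apply: leq_trans (_ : \sum_(w : V) (2 * ('C(max_deg adj, 2) * T)) <= _)%N.
    apply: leq_sum => w _; rewrite leq_mul2l /= leq_mul2r; apply/orP; right.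
    have d1 := card_Sx [set x | adj x w].
    have d2 := card_Sx [set y | adj w y].
    have dw : (deg adj w <= max_deg adj)%N by apply: leq_bigmax.
    apply: leq_trans (leq_bin2l 2 dw).
    apply: leq_trans (pred_le_bin2 _).
    rewrite /deg /Sin /Sout; lia.
  rewrite sum_nat_const (_ : #|xpredT| = #|V|); last by apply: eq_card.
  lia.
rewrite ler_pdivrMr ?ltr0n // mulrAC ler_pdivlMr ?ltr0n // -!natrM ler_nat.
exact: HN.
Qed.
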